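(* Let $\mathcal{K}$ be a Hilbert space of dimension $D$ with a fixed orthonormal basis $\{|j\rangle\}_{j=1}^D$, let $\epsilon>0$, and let $U_1,\ldots,U_K$ be unitaries on $\mathcal{K}$ with $K \leq (10/\epsilon)^2 D\log(20D/\epsilon)$ such that $\frac{1-\epsilon}{D}\mathbb{1}\leq\frac{1}{K}\sum_{k}U_k\varphi U_k^*\leq\frac{1+\epsilon}{D}\mathbb{1}$ for every state $\varphi$ on $\mathcal{K}$. Consider the following protocol: Sender and Receiver share $|\Phi_D\rangle=\frac{1}{\sqrt D}\sum_{j=1}^D|j\rangle|j\rangle$; the Sender, given a description of a pure state $\psi=|\psi\rangle\langle\psi|$ on $\mathcal{K}$, measures on her half of $\Phi_D$ the POVM $$A_k=\frac{D}{K(1+\epsilon)}U_k\overline{\psi}U_k^*\ (k=1,\ldots,K),\qquad A_{\rm failure}=\mathbb{1}-\sum_{k=1}^K A_k,$$ and announces the outcome (''failure'' or $k$); if the outcome is $k$, the Receiver applies $U_k^\top$ to his half of $\Phi_D$. Then for every pure state $|\psi\rangle\in\mathcal{K}$ this protocol realises remote state preparation exactly with probability of failure exactly $\frac{\epsilon}{1+\epsilon}\leq\epsilon$ (i.e. whenever the outcome is not ''failure'', the Receiver's state is exactly $\psi$). In particular, probabilistic exact remote state preparation of arbitrary pure states on $\mathcal{K}$ with error $\epsilon$ is possible using $$\log D+2\log\frac{10}{\epsilon}+\log\log\frac{20D}{\epsilon}\ \text{cbits}\quad\text{and}\quad \log D\ \text{ebits}.$$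
   Context: $\overline{\cdot}$ denotes complex conjugation and ${}^\top$ the transpose, both with respect to the basis $\{|j\rangle\}$; $\log$ is to base 2. A remote state preparation (r.s.p.) protocol: a Sender is given a classical description of a state from a set $\mathcal{X}$ of states on $\mathcal{K}$, and together with a Receiver uses resources (here: a shared maximally entangled state and forward classical communication) to produce a state $\widetilde\rho$ held by the Receiver. It is probabilistic exact with error $\epsilon$ if it additionally produces a flag, known to both parties, indicating ''success'' or ''failure'', such that for every input state $\rho\in\mathcal X$ the failure probability is at most $\epsilon$ and $\widetilde\rho=\rho$ whenever the flag is ''success''. Using $\log D$ ebits means using a maximally entangled state of Schmidt rank $D$; using $c$ cbits means the forward classical message takes at most $2^c$ values. *)

(* Defs.v *)
From HB Require Import structures.
From mathcomp Require Import all_boot all_order all_algebra.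
From mathcomp Require Import complex mxtens.
From mathcomp Require Import reals exp.
Set Implicit Arguments.
Unset Strict Implicit.
Unset Printing Implicit Defensive.
Import Order.TTheory GRing.Theory Num.Theory.
Local Open Scope ring_scope.
Local Open Scope complex_scope.

Section QDefs.
Variable R : realType.
Local Notation C := R[i].

Definition log2 (x : R) : R := ln x / ln 2.

Definition adjmx {m n} (A : 'M[C]_(m, n)) : 'M[C]_(n, m) := (map_mx Num.conj A)^T.
Definition cconjmx {m n} (A : 'M[C]_(m, n)) : 'M[C]_(m, n) := map_mx Num.conj A.

Definition psd {n} (A : 'M[C]_n) : Prop :=
  forall v : 'cV[C]_n, 0 <= (adjmx v *m A *m v) 0 0.
Definition loewner {n} (A B : 'M[C]_n) : Prop := psd (B - A).

Definition is_state {n} (rho : 'M[C]_n) : Prop := psd rho /\ \tr rho = 1.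

Definition unitary {n} (U : 'M[C]_n) : Prop :=
  adjmx U *m U = 1%:M /\ U *m adjmx U = 1%:M.

Definition unit_vector {n} (v : 'cV[C]_n) : Prop := (adjmx v *m v) 0 0 = 1.

Definition proj {n} (v : 'cV[C]_n) : 'M[C]_n := v *m adjmx v.

Definition ket {n} (j : 'I_n) : 'cV[C]_n := delta_mx j 0.

(* |Phi_D> = D^{-1/2} sum_j |j>|j> ; first factor = Sender, second = Receiver *)
Definition max_ent (D : nat) : 'cV[C]_(D * D) :=
  (sqrtC (D%:R : C))^-1 *: \sum_(j < D) (ket j *t ket j).

Definition ptrace1 {m n} (M : 'M[C]_(m * n)) : 'M[C]_n :=
  \matrix_(i, j) \sum_(a < m) M (mxtens_index (a, i)) (mxtens_index (a, j)).

(* Sender measures POVM element A on her factor of the joint state rho: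
   probability of the outcome, and the Receiver's (unnormalised) conditional state
   Tr_1[(sqrt A (x) 1) rho (sqrt A (x) 1)] = Tr_1[(A (x) 1) rho]. *)
Definition outcome_prob {m n} (A : 'M[C]_m) (rho : 'M[C]_(m * n)) : C :=
  \tr ((A *t (1%:M : 'M[C]_n)) *m rho).
Definition receiver_state {m n} (A : 'M[C]_m) (rho : 'M[C]_(m * n)) : 'M[C]_n :=
  ptrace1 ((A *t (1%:M : 'M[C]_n)) *m rho).

Definition povm_elt (D K : nat) (eps : R) (U : 'I_K -> 'M[C]_D) (psi : 'cV[C]_D)
    (k : 'I_K) : 'M[C]_D :=
  ((D%:R / (K%:R * (1 + eps))) %:C) *: (U k *m cconjmx (proj psi) *m adjmx (U k)).
Definition povm_fail (D K : nat) (eps : R) (U : 'I_K -> 'M[C]_D) (psi : 'cV[C]_D)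
    : 'M[C]_D :=
  1%:M - \sum_(k < K) povm_elt eps U psi k.

Definition rsp_output (D K : nat) (eps : R) (U : 'I_K -> 'M[C]_D) (psi : 'cV[C]_D)
    (k : 'I_K) : 'M[C]_D :=
  (U k)^T *m receiver_state (povm_elt eps U psi k) (proj (max_ent D)) *m adjmx ((U k)^T).

End QDefs.
Arguments max_ent {R} D.
Arguments log2 {R} x.

(* Main.v *)
Require Import Defs.
From HB Require Import structures.
From mathcomp Require Import all_boot all_order all_algebra.
From mathcomp Require Import complex mxtens.
From mathcomp Require Import reals exp.
From mathcomp Require Import ring lra.
Import Order.TTheory GRing.Theory Num.Theory.
Local Open Scope ring_scope.
Local Open Scope complex_scope.
Section T.
Variable R : realType.
Local Notation C := R[i].

Lemma adjmxM m n p (A : 'M[C]_(m, n)) (B : 'M[C]_(n, p)) :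
  adjmx (A *m B) = adjmx B *m adjmx A.
Proof. by rewrite /adjmx map_mxM trmx_mul. Qed.

Lemma adjmxK m n (A : 'M[C]_(m, n)) : adjmx (adjmx A) = A.
Proof. by apply/matrixP=> i j; rewrite !mxE conjCK. Qed.

Lemma cconjmxK m n (A : 'M[C]_(m, n)) : cconjmx (cconjmx A) = A.
Proof. by apply/matrixP=> i j; rewrite !mxE conjCK. Qed.

Lemma adjmx_cconj m n (A : 'M[C]_(m, n)) : adjmx (cconjmx A) = A^T.
Proof. by apply/matrixP=> i j; rewrite !mxE conjCK. Qed.

Lemma adjmx_tr m n (A : 'M[C]_(m, n)) : adjmx (A^T) = cconjmx A.
Proof. by apply/matrixP=> i j; rewrite !mxE. Qed.

Lemma cconjmxM m n p (A : 'M[C]_(m, n)) (B : 'M[C]_(n, p)) :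
  cconjmx (A *m B) = cconjmx A *m cconjmx B.
Proof. by rewrite /cconjmx map_mxM. Qed.

Lemma adjmxZ m n (a : C) (A : 'M[C]_(m, n)) : adjmx (a *: A) = Num.conj a *: adjmx A.
Proof. by apply/matrixP=> i j; rewrite !mxE rmorphM. Qed.

Lemma adjmx_sum m n I (r : seq I) (F : I -> 'M[C]_(m, n)) :
  adjmx (\sum_(i <- r) F i) = \sum_(i <- r) adjmx (F i).
Proof.
apply/matrixP=> i j; rewrite mxE mxE summxE rmorph_sum summxE.
by apply: eq_bigr=> k _; rewrite !mxE.
Qed.

Lemma adjmx_tens m n p q (A : 'M[C]_(m, n)) (B : 'M[C]_(p, q)) :
  adjmx (A *t B) = adjmx A *t adjmx B.
Proof. by rewrite /adjmx map_mxT trmx_tens. Qed.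

Lemma adjmx_ket n (j : 'I_n) : adjmx (@ket R n j) = delta_mx 0 j.
Proof. by apply/matrixP=> a b; rewrite /adjmx /ket !mxE conjC_nat andbC. Qed.

Lemma entry11 m (A : 'M[C]_(1, m)) (B : 'M[C]_(m, 1)) :
  adjmx (A *m B) 0 0 = Num.conj ((A *m B) 0 0).
Proof. by rewrite !mxE. Qed.

Lemma quad_proj n (v w : 'cV[C]_n) :
  (adjmx v *m proj w *m v) 0 0 = (adjmx v *m w) 0 0 * Num.conj ((adjmx v *m w) 0 0).
Proof.
rewrite /proj !mulmxA -(mulmxA _ (adjmx w)).
have -> : adjmx w *m v = adjmx (adjmx v *m w) by rewrite adjmxM adjmxK.
by rewrite [LHS]mxE big_ord1 entry11.
Qed.

Lemma psd_proj n (w : 'cV[C]_n) : psd (proj w).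
Proof. by move=> v; rewrite quad_proj mul_conjC_ge0. Qed.

Lemma psd_scale n (c : C) (M : 'M[C]_n) : 0 <= c -> psd M -> psd (c *: M).
Proof.
move=> c0 pM v; rewrite -scalemxAr -scalemxAl mxE.
exact: mulr_ge0 (pM v).
Qed.

Lemma tr_proj n (x : 'cV[C]_n) : \tr (proj x) = (adjmx x *m x) 0 0.
Proof. by rewrite /proj mxtrace_mulC /mxtrace big_ord1. Qed.


Lemma ptrace1_sum m n I (r : seq I) (F : I -> 'M[C]_(m * n)) :
  ptrace1 (\sum_(i <- r) F i) = \sum_(i <- r) ptrace1 (F i).
Proof.
apply/matrixP=> i j; rewrite mxE summxE.
under eq_bigr do rewrite summxE.
rewrite exchange_big /=; apply: eq_bigr => k _; by rewrite mxE.
Qed.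

Lemma ptrace1_scale m n (a : C) (M : 'M[C]_(m * n)) :
  ptrace1 (a *: M) = a *: ptrace1 M.
Proof.
apply/matrixP=> i j; rewrite !mxE mulr_sumr; apply: eq_bigr => k _; by rewrite mxE.
Qed.

Lemma ptrace1_tens m n (X : 'M[C]_m) (Y : 'M[C]_n) :
  ptrace1 (X *t Y) = \tr X *: Y.
Proof.
apply/matrixP=> i j; rewrite !mxE /mxtrace mulr_suml; apply: eq_bigr => k _.
by rewrite tensmxE.
Qed.

Lemma tr_ptrace1 m n (M : 'M[C]_(m * n)) : \tr M = \tr (ptrace1 M).
Proof.
rewrite /mxtrace.
under [RHS]eq_bigr do rewrite mxE.
rewrite exchange_big pair_big /=.
rewrite (reindex (@mxtens_index m n)) /=; last first.
  by exists (@mxtens_unindex m n) => x _; [apply: mxtens_indexK | apply: mxtens_unindexK].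
by apply: eq_bigr => -[a b] _.
Qed.

Lemma tr_delta n (A : 'M[C]_n) (j l : 'I_n) : \tr (A *m delta_mx j l) = A l j.
Proof.
rewrite /mxtrace (bigD1 l) //= big1 ?addr0.
  rewrite mxE (bigD1 j) //= big1 ?addr0; first by rewrite !mxE !eqxx mulr1.
  by move=> k /negbTE kj; rewrite !mxE kj mulr0.
move=> i /negbTE il; rewrite mxE big1 // => k _; by rewrite !mxE il andbF mulr0.
Qed.

Lemma sqrtD_inv (D : nat) : (sqrtC (D%:R : C))^-1 * Num.conj ((sqrtC (D%:R : C))^-1)
   = (D%:R)^-1.
Proof.
rewrite geC0_conj ?invr_ge0 ?sqrtC_ge0 ?ler0n // -invfM -expr2 sqrtCK.
by [].
Qed.

Lemma ket_tens_prod n (j l : 'I_n) :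
  (@ket R n j *t @ket R n j) *m adjmx (@ket R n l *t @ket R n l)
  = delta_mx j l *t delta_mx j l.
Proof.
by rewrite adjmx_tens !adjmx_ket tensmx_mul /ket !mul_delta_mx.
Qed.

Lemma proj_max_ent (D : nat) : proj (max_ent D) =
  (D%:R : C)^-1 *: \sum_(j < D) \sum_(l < D) (delta_mx j l *t delta_mx j l).
Proof.
rewrite /proj /max_ent adjmxZ -scalemxAr -scalemxAl scalerA mulrC sqrtD_inv; congr (_ *: _).
rewrite adjmx_sum mulmx_suml; apply: eq_bigr => j _.
rewrite mulmx_sumr; apply: eq_bigr => l _.
by rewrite ket_tens_prod.
Qed.

Lemma receiver_max_ent (D : nat) (A : 'M[C]_D) :
  receiver_state A (proj (max_ent D)) = (D%:R : C)^-1 *: A^T.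
Proof.
rewrite /receiver_state proj_max_ent -scalemxAr ptrace1_scale; congr (_ *: _).
rewrite mulmx_sumr ptrace1_sum.
under eq_bigr => j _ do rewrite mulmx_sumr ptrace1_sum.
under eq_bigr => j _ do under eq_bigr => l _ do rewrite tensmx_mul mul1mx ptrace1_tens tr_delta.
rewrite [RHS]matrix_sum_delta; apply: eq_bigr => j _; apply: eq_bigr => l _.
by rewrite mxE.
Qed.

Lemma outcome_max_ent (D : nat) (A : 'M[C]_D) :
  outcome_prob A (proj (max_ent D)) = (D%:R : C)^-1 * \tr A.
Proof.
by rewrite /outcome_prob tr_ptrace1 -/(receiver_state _ _) receiver_max_ent mxtraceZ mxtrace_tr.
Qed.

Lemma cconj_adj m n (x : 'M[C]_(m, n)) : cconjmx (adjmx x) = x^T.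
Proof. by apply/matrixP=> i j; rewrite !mxE conjCK. Qed.

Lemma cconj_proj n (x : 'cV[C]_n) : cconjmx (proj x) = proj (cconjmx x).
Proof.
have E : cconjmx (adjmx x) = x^T by apply/matrixP=> i j; rewrite !mxE conjCK.
by rewrite /proj cconjmxM E adjmx_cconj.
Qed.

Lemma proj_mul n (A : 'M[C]_n) (x : 'cV[C]_n) : proj (A *m x) = A *m proj x *m adjmx A.
Proof. by rewrite /proj adjmxM !mulmxA. Qed.

Lemma trmx_proj n (x : 'cV[C]_n) : (proj x)^T = proj (cconjmx x).
Proof. by rewrite /proj trmx_mul adjmx_cconj /adjmx trmxK. Qed.

Lemma onepe_neq0 (e : R) : 0 < e -> (1 + e%:C) != 0 :> C.
Proof.
move=> e0; apply/eqP => h; have := congr1 (@complex.Re R) h => /=.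
move=> h'; lra.
Qed.

Lemma unitary_trconj n (U : 'M[C]_n) : adjmx U *m U = 1%:M -> U^T *m cconjmx U = 1%:M.
Proof.
move=> H; have := congr1 trmx H.
by rewrite trmx_mul /adjmx trmxK trmx1.
Qed.

Lemma final_rsp n (U : 'M[C]_n) (psi : 'cV[C]_n) (a : C) : a != 0 ->
  adjmx U *m U = 1%:M ->
  a^-1 *: (a *: (U^T *m cconjmx U *m psi *m adjmx psi *m U^T *m cconjmx U)) = proj psi.
Proof.
move=> a0 H; have Hc := @unitary_trconj n U H.
by rewrite Hc mul1mx -mulmxA Hc mulmx1 scalerA mulVf // scale1r.
Qed.

Lemma tr_fail n K (c : C) (F : 'I_K -> 'M[C]_n) : (forall k, \tr (F k) = 1) ->
  \tr (1%:M - c *: \sum_k F k) = n%:R - c * K%:R.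
Proof.
move=> H; rewrite mxtraceD raddfN /= mxtraceZ mxtrace1 raddf_sum /=.
by under eq_bigr do rewrite H; rewrite sumr_const card_ord mulr_natr.
Qed.

End T.

Theorem theorem5 (R : realType) (D K : nat) (eps : R) (U : 'I_K -> 'M[R[i]]_D) :
  (0 < D)%N -> (0 < K)%N -> 0 < eps ->
  (K%:R <= (10 / eps) ^+ 2 * D%:R * log2 (20 * D%:R / eps)) ->
  (forall k, unitary (U k)) ->
  (forall phi : 'M[R[i]]_D, is_state phi ->
     loewner (((1 - eps) / D%:R)%:C)%:M
             ((K%:R)^-1 *: \sum_(k < K) (U k *m phi *m adjmx (U k)))
     /\ loewner ((K%:R)^-1 *: \sum_(k < K) (U k *m phi *m adjmx (U k)))
                (((1 + eps) / D%:R)%:C)%:M) ->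
  forall psi : 'cV[R[i]]_D, unit_vector psi ->
    (forall k, psd (povm_elt eps U psi k)) /\ psd (povm_fail eps U psi) /\
    (forall k, outcome_prob (povm_elt eps U psi k) (proj (max_ent D)) != 0 ->
       (outcome_prob (povm_elt eps U psi k) (proj (max_ent D)))^-1 *:
         rsp_output eps U psi k = proj psi) /\
    outcome_prob (povm_fail eps U psi) (proj (max_ent D)) = (eps / (1 + eps))%:C /\
    eps / (1 + eps) <= eps /\
    log2 K%:R <= log2 D%:R + 2 * log2 (10 / eps) + log2 (log2 (20 * D%:R / eps)).
Proof.
move=> D0 K0 e0 HK HU Hmix psi Hpsi.
have DC0 : (D%:R : R[i]) != 0 by rewrite pnatr_eq0 -lt0n.
have KC0 : (K%:R : R[i]) != 0 by rewrite pnatr_eq0 -lt0n.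
have eC0 := @onepe_neq0 R eps e0.
set w := cconjmx psi.
set c : R[i] := ((D%:R / (K%:R * (1 + eps)))%:C).
have Ew : forall k, povm_elt eps U psi k = c *: proj (U k *m w).
  by move=> k; rewrite /povm_elt cconj_proj -proj_mul.
have unit_w : (adjmx w *m w) 0 0 = 1.
  rewrite /w adjmx_cconj.
  have -> : psi^T *m cconjmx psi = cconjmx (adjmx psi *m psi).
    by rewrite cconjmxM cconj_adj.
  by rewrite mxE Hpsi conjC1.
have unit_x : forall k, (adjmx (U k *m w) *m (U k *m w)) 0 0 = 1.
  move=> k; rewrite adjmxM -mulmxA (mulmxA (adjmx (U k))) (HU k).1 mul1mx.
  exact: unit_w.
have trx : forall k, \tr (proj (U k *m w)) = 1 by move=> k; rewrite tr_proj unit_x.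
have c0 : 0 <= c.
  rewrite /c ler0c divr_ge0 ?ler0n // mulr_ge0 ?ler0n //; lra.
split.
  by move=> k; rewrite Ew; apply: psd_scale => //; exact: psd_proj.
split.
  have Hs : is_state (proj w) by split; [exact: psd_proj | rewrite tr_proj unit_w].
  have := (Hmix _ Hs).2; rewrite /loewner.
  under eq_bigr do rewrite -proj_mul.
  set S := \sum_(k < K) _ => HS.
  have -> : povm_fail eps U psi =
     ((D%:R / (1 + eps))%:C) *: ((((1 + eps) / D%:R)%:C)%:M - K%:R^-1 *: S).
    rewrite /povm_fail scalerBr scale_scalar_mx scalerA.
    under eq_bigr do rewrite Ew.
    rewrite -scaler_sumr; congr (_%:M - _ *: _).
      rewrite -rmorphM; congr (_%:C); field.
      apply/andP; split; first by rewrite pnatr_eq0 -lt0n.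
      by apply/negP => /eqP h; lra.
    rewrite /c !(rmorphM, rmorphD, fmorphV, rmorph1, rmorph_nat).
    by field; apply/andP; split.
  apply: psd_scale; last exact: HS.
  rewrite ler0c divr_ge0 ?ler0n //; lra.
split.
  move=> k; rewrite Ew outcome_max_ent mxtraceZ trx mulr1 => Hp.
  rewrite /rsp_output receiver_max_ent Ew [(c *: _)^T]linearZ /= trmx_proj cconjmxM cconjmxK.
  rewrite proj_mul adjmx_cconj adjmx_tr.
  rewrite scalerA -scalemxAr -scalemxAl !mulmxA.
  exact: (@final_rsp R D (U k) psi _ Hp (HU k).1).
split.
  rewrite outcome_max_ent /povm_fail.
  under eq_bigr do rewrite Ew.
  rewrite -scaler_sumr (@tr_fail R D K c _ trx) /c.
  rewrite !(rmorphM, rmorphD, fmorphV, rmorph1, rmorph_nat).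
  by field; apply/and3P; split.
split.
  rewrite ler_pdivrMr; last lra.
  nra.
set L := log2 (20 * D%:R / eps).
have a0 : 0 < 10 / eps by rewrite divr_gt0.
have Dr0 : 0 < (D%:R : R) by rewrite ltr0n.
have K1 : 1 <= (K%:R : R) by rewrite ler1n.
have a20 : 0 < (10 / eps) ^+ 2 * D%:R by rewrite mulr_gt0 // exprn_gt0.
have L0 : 0 < L.
  rewrite ltNge; apply/negP => HL.
  have : (10 / eps) ^+ 2 * D%:R * L <= 0 by rewrite mulr_ge0_le0 // ltW.
  move=> H1; have := le_trans K1 (le_trans HK H1); by rewrite ler10.
have l20 : 0 < ln (2 : R) by rewrite ln_gt0 // ltr1n.
have Hln : ln (K%:R : R) <= ln (10 / eps) *+ 2 + ln D%:R + ln L.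
  have Kp : 0 < (K%:R : R) by lra.
  have H0 : ln (K%:R : R) <= ln ((10 / eps) ^+ 2 * D%:R * L).
    have P2 : 0 < (10 / eps) ^+ 2 * D%:R * L by rewrite mulr_gt0.
    have := @ler_ln R (K%:R) ((10 / eps) ^+ 2 * D%:R * L).
    rewrite !posrE => /(_ Kp P2) ->; exact: HK.
  have E1 := @lnM R ((10 / eps) ^+ 2 * D%:R) L.
  rewrite !posrE in E1; rewrite (E1 a20 L0) in H0.
  have E2 := @lnM R ((10 / eps) ^+ 2) D%:R.
  rewrite !posrE in E2; rewrite (E2 (exprn_gt0 2 a0) Dr0) (lnXn 2 a0) in H0.
  exact: H0.
rewrite /log2 -/L.
have -> : ln D%:R / ln 2 + 2 * (ln (10 / eps) / ln 2) + ln L / ln 2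
  = (ln (10 / eps) *+ 2 + ln D%:R + ln L) / ln 2 :> R.
  rewrite -mulr_natl; field; lra.
by rewrite ler_pM2r ?invr_gt0.
Qed.
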